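(* Let $R$ be a ring of the standard form below, and write its elements as $a=(a_1,\dots,a_t)$ with $a_i\in R_i$. Then the normalized homogeneous weight on $R$ is $$\omega(a_1,\dots,a_t)=\begin{cases}1-\prod_{i=1}^t\left(\dfrac{-1}{q_i-1}\right)^{\mathrm{wt}(a_i)},& a\in\mathrm{soc}(R),\\[1ex] 1,& a\notin\mathrm{soc}(R).\end{cases}$$
   Context: Standard form: $R=R_1\times\cdots\times R_t$ with $R_i=R_{i,1}\times\cdots\times R_{i,n_i}$, where each $R_{i,j}$ is a finite local Frobenius ring (local: $\mathrm{rad}(R_{i,j})$, the Jacobson radical, is the unique maximal left ideal; Frobenius: admits a generating character, i.e. a character $\chi$ of the additive group with $r\mapsto(x\mapsto\chi(xr))$ a bijection onto the character group), with $|R_{i,j}/\mathrm{rad}(R_{i,j})|=|\mathrm{soc}(R_{i,j})|=q_i$ for all $j$, and $q_1,\dots,q_t$ distinct. Here $\mathrm{soc}$ denotes the socle; $\mathrm{soc}(R)=\prod_{i,j}\mathrm{soc}(R_{i,j})$. For $a_i=(a_{i,1},\dots,a_{i,n_i})\in R_i$, $\mathrm{wt}(a_i)=|\{j:a_{i,j}\neq0\}|$ is the Hamming weight. The normalized homogeneous weight on a finite Frobenius ring $S$ is the unique $\omega:S\to\mathbb Q$ with $\omega(0)=0$, $\omega(x)=\omega(y)$ whenever $Sx=Sy$, and $\sum_{y\in Sx}\omega(y)=|Sx|$ for all $x\ne0$. *)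

(* Defs.v *)
From HB Require Import structures.
From mathcomp Require Import all_boot all_order all_algebra all_field.
Set Implicit Arguments. Unset Strict Implicit. Unset Printing Implicit Defensive.
Import Order.TTheory GRing.Theory Num.Theory.
Local Open Scope ring_scope.

Section DProd.
Variables (K : finType) (F : K -> finPzRingType).

Definition dprod := {dffun forall k : K, F k}.
HB.instance Definition _ := Finite.on dprod.

Definition dp_zero : dprod := [ffun k => 0].
Definition dp_opp (a : dprod) : dprod := [ffun k => - a k].
Definition dp_add (a b : dprod) : dprod := [ffun k => a k + b k].
Definition dp_one : dprod := [ffun k => 1].
Definition dp_mul (a b : dprod) : dprod := [ffun k => a k * b k].

Lemma dp_addA : associative dp_add.
Proof. by move=> a b c; apply/ffunP=> k; rewrite !ffunE addrA. Qed.
Lemma dp_addC : commutative dp_add.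
Proof. by move=> a b; apply/ffunP=> k; rewrite !ffunE addrC. Qed.
Lemma dp_add0 : left_id dp_zero dp_add.
Proof. by move=> a; apply/ffunP=> k; rewrite !ffunE add0r. Qed.
Lemma dp_addN : left_inverse dp_zero dp_opp dp_add.
Proof. by move=> a; apply/ffunP=> k; rewrite !ffunE addNr. Qed.
Lemma dp_mulA : associative dp_mul.
Proof. by move=> a b c; apply/ffunP=> k; rewrite !ffunE mulrA. Qed.
Lemma dp_mul1 : left_id dp_one dp_mul.
Proof. by move=> a; apply/ffunP=> k; rewrite !ffunE mul1r. Qed.
Lemma dp_mulr1 : right_id dp_one dp_mul.
Proof. by move=> a; apply/ffunP=> k; rewrite !ffunE mulr1. Qed.
Lemma dp_mulDl : left_distributive dp_mul dp_add.
Proof. by move=> a b c; apply/ffunP=> k; rewrite !ffunE mulrDl. Qed.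
Lemma dp_mulDr : right_distributive dp_mul dp_add.
Proof. by move=> a b c; apply/ffunP=> k; rewrite !ffunE mulrDr. Qed.

HB.instance Definition _ := GRing.isPzRing.Build dprod
  dp_addA dp_addC dp_add0 dp_addN dp_mulA dp_mul1 dp_mulr1 dp_mulDl dp_mulDr.

Lemma dprod_addE (a b : dprod) k : (a + b) k = a k + b k.
Proof. by rewrite /GRing.add /= ffunE. Qed.
Lemma dprod_mulE (a b : dprod) k : (a * b) k = a k * b k.
Proof. by rewrite /GRing.mul /= ffunE. Qed.
Lemma dprod0E k : (0 : dprod) k = 0.
Proof. by rewrite /GRing.zero /= ffunE. Qed.
End DProd.

Section RingNotions.
Variable S : finPzRingType.

Definition left_ideal (I : {set S}) : bool :=
  [&& (0 : S) \in I,
      [forall x in I, forall y in I, x - y \in I] &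
      [forall r : S, forall x in I, r * x \in I]].

Definition maximal_left_ideal (I : {set S}) : bool :=
  [&& left_ideal I, I != [set: S] &
      [forall J : {set S}, (left_ideal J && (I \proper J)) ==> (J == [set: S])]].

Definition minimal_left_ideal (I : {set S}) : bool :=
  [&& left_ideal I, I != [set 0] &
      [forall J : {set S}, (left_ideal J && (J \proper I)) ==> (J == [set 0])]].

Definition jrad : {set S} := \bigcap_(I | maximal_left_ideal I) I.

(* (left) socle: the sum of all minimal left ideals, i.e. the smallest
   left ideal containing every minimal left ideal *)
Definition socle : {set S} :=
  \bigcap_(I | left_ideal I &&
              [forall M : {set S}, minimal_left_ideal M ==> (M \subset I)]) I.

Definition local_ring : Prop :=
  maximal_left_ideal jrad /\
  forall I : {set S}, maximal_left_ideal I -> I = jrad.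

(* the additive cosets x + J of a subset J: the elements of S/J *)
Definition cosets_of (J : {set S}) : {set {set S}} :=
  [set [set x + j | j in J] | x : S].

Definition residue_card : nat := #|cosets_of jrad|.

Definition add_character (chi : S -> algC) : Prop :=
  chi 0 = 1 /\ forall x y : S, chi (x + y) = chi x * chi y.

Definition generating_character (chi : S -> algC) : Prop :=
  add_character chi /\
  (forall r : S, add_character (fun x => chi (x * r))) /\
  (forall psi : S -> algC, add_character psi ->
     exists! r : S, forall x : S, psi x = chi (x * r)).

Definition frobenius_ring : Prop :=
  exists chi : S -> algC, generating_character chi.

Definition lprinc (x : S) : {set S} := [set s * x | s : S].

Definition normalized_homogeneous_weight (w : S -> rat) : Prop :=
  [/\ w 0 = 0,
      (forall x y : S, lprinc x = lprinc y -> w x = w y) &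
      (forall x : S, x != 0 -> \sum_(y in lprinc x) w y = #|lprinc x|%:R)].
End RingNotions.

(* Standard form  R = prod_i prod_j R_{i,j}                            *)
Definition std_index (t : nat) (n : 'I_t -> nat) : finType :=
  {i : 'I_t & 'I_(n i)}.

Definition std_ring (t : nat) (n : 'I_t -> nat)
    (R : forall i : 'I_t, 'I_(n i) -> finNzRingType) : finPzRingType :=
  dprod (fun k : std_index n => (R (tag k) (tagged k) : finPzRingType)).

Definition block_wt (t : nat) (n : 'I_t -> nat)
    (R : forall i : 'I_t, 'I_(n i) -> finNzRingType)
    (a : std_ring R) (i : 'I_t) : nat :=
  #|[set j : 'I_(n i) | a (Tagged (fun i => 'I_(n i)) j) != 0]|.

(* Main.v *)
Require Import Defs.
From HB Require Import structures.
From mathcomp Require Import all_boot all_order all_algebra all_field.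
Set Implicit Arguments. Unset Strict Implicit. Unset Printing Implicit Defensive.
Import Order.TTheory GRing.Theory Num.Theory.
Local Open Scope ring_scope.

Section Generic.
Variable S : finPzRingType.

Lemma left_idealP (I : {set S}) :
  reflect [/\ 0 \in I, forall x y, x \in I -> y \in I -> x - y \in I &
                 forall r x, x \in I -> r * x \in I] (left_ideal I).
Proof.
apply: (iffP and3P) => [[H0 /forall_inP H1 /forallP H2]|[H0 H1 H2]]; split => //.
- by move=> x y xI yI; move/forall_inP: (H1 x xI) => /(_ y yI).
- by move=> r x xI; move/forall_inP: (H2 r) => /(_ x xI).
- by apply/forall_inP=> x xI; apply/forall_inP => y yI; apply: H1.
- by apply/forallP=> r; apply/forall_inP => x xI; apply: H2.
Qed.

Lemma lid0 (I : {set S}) : left_ideal I -> 0 \in I.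
Proof. by case/left_idealP. Qed.
Lemma lidB (I : {set S}) x y : left_ideal I -> x \in I -> y \in I -> x - y \in I.
Proof. by case/left_idealP => _ H _; apply: H. Qed.
Lemma lidM (I : {set S}) r x : left_ideal I -> x \in I -> r * x \in I.
Proof. by case/left_idealP => _ _ H; apply: H. Qed.
Lemma lidN (I : {set S}) x : left_ideal I -> x \in I -> - x \in I.
Proof. by move=> LI xI; rewrite -sub0r lidB // lid0. Qed.
Lemma lidD (I : {set S}) x y : left_ideal I -> x \in I -> y \in I -> x + y \in I.
Proof. by move=> LI xI yI; rewrite -[y]opprK lidB // lidN. Qed.

Lemma left_ideal_bigcap (P : pred {set S}) :
  (forall I, P I -> left_ideal I) -> left_ideal (\bigcap_(I | P I) I).
Proof.
move=> HP; apply/left_idealP; split.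
- by apply/bigcapP=> I /HP /lid0.
- move=> x y /bigcapP Hx /bigcapP Hy; apply/bigcapP=> I PI.
  by apply: lidB; [apply: HP|apply: Hx|apply: Hy].
- move=> r x /bigcapP Hx; apply/bigcapP=> I PI.
  by apply: lidM; [apply: HP|apply: Hx].
Qed.

Lemma socle_ideal : left_ideal (socle S).
Proof. by apply: left_ideal_bigcap => I /andP[]. Qed.

Lemma minimal_sub_socle (M : {set S}) : minimal_left_ideal M -> M \subset socle S.
Proof.
move=> HM; apply/subsetP=> x xM; apply/bigcapP=> I /andP[_ /forallP H].
by move/implyP: (H M) => /(_ HM) /subsetP; apply.
Qed.

Lemma lprinc_ideal (x : S) : left_ideal (lprinc x).
Proof.
apply/left_idealP; split.
- by apply/imsetP; exists 0 => //; rewrite mul0r.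
- move=> _ _ /imsetP[a _ ->] /imsetP[b _ ->]; apply/imsetP; exists (a - b) => //.
  by rewrite mulrBl.
- move=> r _ /imsetP[a _ ->]; apply/imsetP; exists (r * a) => //.
  by rewrite mulrA.
Qed.

Lemma lprinc_self (x : S) : x \in lprinc x.
Proof. by apply/imsetP; exists 1 => //; rewrite mul1r. Qed.

Lemma lprinc_sub (x y : S) : y \in lprinc x -> lprinc y \subset lprinc x.
Proof.
case/imsetP=> s _ ->; apply/subsetP=> _ /imsetP[r _ ->].
by apply/imsetP; exists (r * s) => //; rewrite mulrA.
Qed.

Lemma nonzero_elt (M : {set S}) : 0 \in M -> M != [set 0] ->
  exists2 m, m \in M & m != 0.
Proof.
move=> M0 MN; apply/exists_inP; apply/negP => /exists_inP H; case/negP: MN.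
rewrite eqEsubset sub1set M0 andbT; apply/subsetP => x xM; rewrite inE.
by apply/negPn/negP => x0; apply: H; exists x.
Qed.

End Generic.

Lemma card_imset_ker (T U V : finType) (f : T -> U) (g : T -> V) :
  (forall x y, (f x == f y) = (g x == g y)) ->
  #|[set f x | x : T]| = #|[set g x | x : T]|.
Proof.
move=> H.
have E1 : [set f x | x : T] = [set p.1 | p in [set (f x, g x) | x : T]].
  by rewrite -imset_comp.
have E2 : [set g x | x : T] = [set p.2 | p in [set (f x, g x) | x : T]].
  by rewrite -imset_comp.
rewrite E1 E2 (card_in_imset (f := snd)) ?(card_in_imset (f := fst)) //.
- move=> p1 p2 /imsetP[x _ ->] /imsetP[y _ ->] /= e.
  by congr pair => //; apply/eqP; rewrite -H e.
- move=> p1 p2 /imsetP[x _ ->] /imsetP[y _ ->] /= e.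
  by congr pair => //; apply/eqP; rewrite H e.
Qed.

Section Local.
Variable S : finPzRingType.
Hypothesis Sloc : local_ring S.

Lemma minimal_card (M : {set S}) : minimal_left_ideal M -> #|M| = residue_card S.
Proof.
case/and3P=> LM M0 /forallP Hmin.
have [m mM m0] := nonzero_elt (lid0 LM) M0.
have SmM : lprinc m = M.
  have sub : lprinc m \subset M.
    by apply/subsetP=> _ /imsetP[s _ ->]; apply: lidM.
  apply/eqP; rewrite eqEsubset sub /=.
  apply/negPn/negP => nsub.
  move/implyP: (Hmin (lprinc m)); rewrite lprinc_ideal properE sub nsub => /(_ isT) /eqP E.
  by move: (lprinc_self m); rewrite E inE (negbTE m0).
pose ann := [set s : S | s * m == 0].
have Lann : left_ideal ann.
  apply/left_idealP; split; first by rewrite inE mul0r.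
  - by move=> x y; rewrite !inE mulrBl => /eqP -> /eqP ->; rewrite subrr.
  - by move=> r x; rewrite !inE -mulrA => /eqP ->; rewrite mulr0.
have ann_max : maximal_left_ideal ann.
  apply/and3P; split => //.
    apply/negP => /eqP E; move: (in_setT (1 : S)); rewrite -E inE mul1r.
    by rewrite (negbTE m0).
  apply/forallP => J; apply/implyP => /andP[LJ]; rewrite properE => /andP[annJ].
  case/subsetPn => i iJ; rewrite inE => im0.
  pose Jm := [set j * m | j in J].
  have LJm : left_ideal Jm.
    apply/left_idealP; split.
    - by apply/imsetP; exists 0; [apply: lid0|rewrite mul0r].
    - move=> _ _ /imsetP[a aJ ->] /imsetP[b bJ ->]; apply/imsetP; exists (a - b).
        by apply: lidB.
      by rewrite mulrBl.
    - move=> r _ /imsetP[a aJ ->]; apply/imsetP; exists (r * a).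
        by apply: lidM.
      by rewrite mulrA.
  have JmM : Jm \subset M.
    by rewrite -SmM; apply/subsetP => _ /imsetP[j _ ->]; apply/imsetP; exists j.
  have : Jm = M.
    apply/eqP; rewrite eqEsubset JmM /=; apply/negPn/negP => nsub.
    move/implyP: (Hmin Jm); rewrite LJm properE JmM nsub => /(_ isT) /eqP E.
    have : i * m \in Jm by apply/imsetP; exists i.
    by rewrite E inE (negbTE im0).
  move=> E; move: mM; rewrite -E => /imsetP[j jJ mE].
  have j1 : 1 - j \in ann by rewrite inE mulrBl mul1r -mE subrr.
  have oneJ : 1 \in J.
    by rewrite -(subrK j 1) lidD //; apply: (subsetP annJ).
  rewrite eqEsubset subsetT /=; apply/subsetP => r _.
  by rewrite -(mulr1 r) lidM.
have annj : ann = jrad S by apply: Sloc.2.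
rewrite /residue_card -annj -SmM /cosets_of /lprinc.
apply: card_imset_ker => x y; apply/eqP/eqP => e.
- apply/setP => z; apply/imsetP/imsetP => [[j jA ->]|[j jA ->]].
  + exists (x - y + j); last by rewrite addrA [_ + (_ - _)]addrC addrNK.
    apply: lidD => //; rewrite inE mulrBl e subrr //.
  + exists (y - x + j); last by rewrite addrA [_ + (_ - _)]addrC addrNK.
    apply: lidD => //; rewrite inE mulrBl e subrr //.
- have : x \in [set y + j | j in ann].
    by rewrite -e; apply/imsetP; exists 0; [apply: lid0|rewrite addr0].
  case/imsetP => j; rewrite inE => /eqP jm ->.
  by rewrite mulrDl jm addr0.
Qed.

Lemma exists_minimal (L : {set S}) x : left_ideal L -> x \in L -> x != 0 ->
  exists2 M, minimal_left_ideal M & M \subset L.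
Proof.
move=> LL xL x0.
pose P := fun J : {set S} => [&& left_ideal J, J \subset L & J != [set 0]].
have PL : P L.
  rewrite /P LL subxx /=; apply/negP => /eqP E; move: xL; rewrite E inE.
  by rewrite (negbTE x0).
case: (@arg_minnP _ L P (fun J : {set S} => #|J|) PL) => M /and3P[LM ML M0] Hmin.
exists M => //; apply/and3P; split => //.
apply/forallP => J; apply/implyP => /andP[LJ JM].
apply/negPn/negP => J0.
have PJ : P J.
  by rewrite /P LJ J0 (subset_trans (proper_sub JM) ML).
by move: (Hmin J PJ); rewrite leqNgt proper_card.
Qed.

Hypothesis Hsoc : #|socle S| = residue_card S.

Lemma socle_sub (L : {set S}) x : left_ideal L -> x \in L -> x != 0 ->
  socle S \subset L.
Proof.
move=> LL xL x0; case: (exists_minimal LL xL x0) => M HM ML.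
have MS := minimal_sub_socle HM.
have : M == socle S by rewrite eqEcard MS Hsoc (minimal_card HM) leqnn.
by move/eqP <-.
Qed.

Lemma residue_gt1 : (1 < residue_card S)%N.
Proof.
case: Sloc => /and3P[Lj jT _] _.
have [x xj] : exists x, x \notin jrad S.
  apply/existsP; apply/negP => /existsP H; case/negP: jT.
  rewrite eqEsubset subsetT /=; apply/subsetP => x _.
  by apply/negPn/negP => xn; apply: H; exists x.
apply/card_gt1P; exists [set 0 + j | j in jrad S], [set x + j | j in jrad S].
split; try by apply/imsetP; eexists.
apply/negP => /eqP E.
have : x \in [set 0 + j | j in jrad S].
  by rewrite E; apply/imsetP; exists 0; [apply: lid0|rewrite addr0].
by case/imsetP => j jJ; rewrite add0r => xE; move: xj; rewrite xE jJ.
Qed.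

End Local.

Lemma nhw_unique (S : finPzRingType) (w1 w2 : S -> rat) :
  normalized_homogeneous_weight w1 -> normalized_homogeneous_weight w2 ->
  forall x, w1 x = w2 x.
Proof.
case=> w10 w1e w1s [w20 w2e w2s] x.
have [N] := ubnP #|lprinc x|; elim: N x => // N IH x ltx.
have [->|x0] := eqVneq x 0; first by rewrite w10 w20.
have E1 := w1s x x0; rewrite -(w2s x x0) in E1.
pose G := [pred y | lprinc y == lprinc x].
rewrite (bigID G) [in RHS](bigID G) /= in E1.
have E2 : \sum_(y in lprinc x | ~~ G y) w1 y = \sum_(y in lprinc x | ~~ G y) w2 y.
  apply: eq_bigr => y /andP[yx nG]; apply: IH.
  have P : lprinc y \proper lprinc x by rewrite properEneq nG lprinc_sub.
  by apply: leq_trans (proper_card P) _; rewrite -ltnS.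
rewrite E2 in E1; move/addIr: E1.
have Ew : forall w : S -> rat, (forall a b, lprinc a = lprinc b -> w a = w b) ->
    \sum_(y in lprinc x | G y) w y = w x *+ #|[set y in lprinc x | G y]|.
  move=> w we; rewrite -sumr_const; apply: eq_big => y; first by rewrite inE.
  by case/andP => _ /eqP /we.
rewrite (Ew w1 w1e) (Ew w2 w2e).
have : (0 < #|[set y in lprinc x | G y]|)%N.
  by apply/card_gt0P; exists x; rewrite inE lprinc_self /G inE eqxx.
move=> /lt0n_neq0 n0 e.
set n := #|_| in n0 e *.
have nz : (n%:R : rat) != 0 by rewrite pnatr_eq0.
move: e; rewrite -[w1 x *+ n]mulr_natr -[w2 x *+ n]mulr_natr => e.
by rewrite -(mulfK nz (w1 x)) e mulfK.
Qed.


Lemma soc0 (S : finPzRingType) : (0 : S) \in socle S.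
Proof. exact: (lid0 (socle_ideal S)). Qed.
Lemma socB (S : finPzRingType) (x y : S) : x \in socle S -> y \in socle S -> x - y \in socle S.
Proof. exact: (lidB (socle_ideal S)). Qed.
Lemma socM (S : finPzRingType) (r x : S) : x \in socle S -> r * x \in socle S.
Proof. exact: (lidM _ (socle_ideal S)). Qed.

Section Prod.
Variables (K : finType) (F : K -> finPzRingType).
Local Notation T := (dprod F).

Lemma dprodNE (a : T) k : (- a) k = - a k.
Proof. by rewrite /GRing.opp /= ffunE. Qed.
Lemma dprodBE (a b : T) k : (a - b) k = a k - b k.
Proof. by rewrite dprod_addE dprodNE. Qed.
Lemma dprod1E k : (1 : T) k = 1.
Proof. by rewrite /GRing.one /= ffunE. Qed.

Lemma dprod_sumE (I : finType) (P : pred I) (G : I -> T) k :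
  (\sum_(i | P i) G i) k = \sum_(i | P i) G i k.
Proof. by elim/big_rec2: _ => [|i y1 y2 _ <-]; rewrite ?dprod0E ?dprod_addE. Qed.

Definition liftc (k0 : K) (z : F k0) : T :=
  [ffun k => match k0 =P k with
             | ReflectT e => eq_rect k0 (fun k => (F k : Type)) z k e
             | ReflectF _ => 0 end].

Lemma lift_at k0 (z : F k0) : liftc z k0 = z.
Proof.
rewrite ffunE; case: eqP => // e.
by have -> : e = erefl := eq_irrelevance _ _.
Qed.

Lemma lift_off k0 (z : F k0) k : k0 != k -> liftc z k = 0.
Proof. by move=> ne; rewrite ffunE; case: eqP => // e; rewrite e eqxx in ne. Qed.

Lemma liftE k0 (z : F k0) k : k0 != k -> liftc z k = 0.
Proof. exact: lift_off. Qed.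

Lemma lift0 k0 : liftc (0 : F k0) = 0.
Proof.
apply/ffunP => k; rewrite dprod0E.
by case: (eqVneq k0 k) => [<-|ne]; rewrite ?lift_at ?lift_off.
Qed.

Lemma liftB k0 (z1 z2 : F k0) : liftc z1 - liftc z2 = liftc (z1 - z2).
Proof.
apply/ffunP => k; rewrite dprodBE.
by case: (eqVneq k0 k) => [<-|ne]; rewrite ?lift_at ?lift_off ?subr0.
Qed.

Lemma liftD k0 (z1 z2 : F k0) : liftc z1 + liftc z2 = liftc (z1 + z2).
Proof.
apply/ffunP => k; rewrite dprod_addE.
by case: (eqVneq k0 k) => [<-|ne]; rewrite ?lift_at ?lift_off ?addr0.
Qed.

Lemma liftMl k0 (r : T) (z : F k0) : r * liftc z = liftc (r k0 * z).
Proof.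
apply/ffunP => k; rewrite dprod_mulE.
by case: (eqVneq k0 k) => [<-|ne]; rewrite ?lift_at ?lift_off ?mulr0.
Qed.

Lemma liftMr k0 (r : F k0) (x : T) : liftc r * x = liftc (r * x k0).
Proof.
apply/ffunP => k; rewrite dprod_mulE.
by case: (eqVneq k0 k) => [<-|ne]; rewrite ?lift_at ?lift_off ?mul0r.
Qed.

Lemma lift_eq0 k0 (z : F k0) : (liftc z == 0) = (z == 0).
Proof.
apply/eqP/eqP => [e|->]; last exact: lift0.
by rewrite -(lift_at z) e dprod0E.
Qed.

Lemma proj_ideal (J : {set T}) k : left_ideal J -> left_ideal [set j k | j : T in J].
Proof.
move=> LJ; apply/left_idealP; split.
- by apply/imsetP; exists 0; [apply: lid0|rewrite dprod0E].
- move=> _ _ /imsetP[a aJ ->] /imsetP[b bJ ->]; apply/imsetP; exists (a - b).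
    by apply: lidB.
  by rewrite dprodBE.
- move=> r _ /imsetP[a aJ ->]; apply/imsetP; exists (liftc r * a).
    by apply: lidM.
  by rewrite dprod_mulE lift_at.
Qed.

Hypothesis loc : forall k, local_ring (F k).
Hypothesis Hsq : forall k, #|socle (F k)| = residue_card (F k).

Lemma socle_nz k : exists2 s, s \in socle (F k) & s != 0.
Proof.
have := residue_gt1 (loc k); rewrite -Hsq => /card_gt1P[x [y [xS yS xy]]].
have [x0|] := eqVneq x 0; last by exists x.
by exists y => //; rewrite -x0 eq_sym.
Qed.

Definition socP : {set T} := [set a : T | [forall k, a k \in socle (F k)]].

Lemma socP_ideal : left_ideal socP.
Proof.
apply/left_idealP; split.
- by rewrite inE; apply/forallP => k; rewrite dprod0E soc0.
- move=> x y; rewrite !inE => /forallP Hx /forallP Hy; apply/forallP => k.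
  by rewrite dprodBE socB // ?Hx ?Hy.
- move=> r x; rewrite !inE => /forallP Hx; apply/forallP => k.
  by rewrite dprod_mulE socM // ?Hx.
Qed.

Lemma socleT_P (a : T) : (a \in socle T) = (a \in socP).
Proof.
apply/idP/idP.
- move=> aS; suff : socle T \subset socP by move/subsetP; apply.
  apply: bigcap_inf; rewrite socP_ideal /=; apply/forallP => M; apply/implyP => HM.
  apply/subsetP => m mM; rewrite inE; apply/forallP => k.
  have [->|mk0] := eqVneq (m k) 0; first by rewrite soc0.
  case/and3P: HM => LM M0 /forallP Hmin.
  have Lk := proj_ideal k LM.
  have mkL : m k \in [set j k | j : T in M] by apply/imsetP; exists m.
  have sub := socle_sub (loc k) (Hsq k) Lk mkL mk0.
  case: (socle_nz k) => s sS s0.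
  case/imsetP: (subsetP sub s sS) => m' m'M sE.
  pose M' := [set m'' in M | m'' k \in socle (F k)].
  have LM' : left_ideal M'.
    apply/left_idealP; split.
    - by rewrite inE lid0 // dprod0E soc0.
    - move=> x y; rewrite !inE => /andP[xM xs] /andP[yM ys].
      by rewrite lidB // dprodBE socB.
    - move=> r x; rewrite !inE => /andP[xM xs].
      by rewrite lidM // dprod_mulE socM.
  have M'M : M' \subset M by apply/subsetP => x; rewrite inE => /andP[].
  suff : M' = M by move=> E; move: mM; rewrite -E inE => /andP[].
  apply/eqP; rewrite eqEsubset M'M /=; apply/negPn/negP => nsub.
  move/implyP: (Hmin M'); rewrite LM' properE M'M nsub => /(_ isT) /eqP E.
  have : m' \in M' by rewrite inE m'M -sE sS.
  rewrite E inE => /eqP m'0; move: s0; by rewrite sE m'0 dprod0E eqxx.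
- rewrite inE => /forallP Ha; apply/bigcapP => I /andP[LI /forallP HI].
  have -> : a = \sum_(k : K) liftc (a k).
    apply/ffunP => k'; rewrite dprod_sumE (bigD1 k') //= lift_at big1 ?addr0 //.
    by move=> k ne; rewrite lift_off // eq_sym.
  apply: (big_ind (fun x => x \in I)) => //; first exact: lid0.
    by move=> x y; apply: lidD.
  move=> k _.
  pose Mk := [set liftc z | z in socle (F k)].
  suff HMk : minimal_left_ideal Mk.
    by move/implyP: (HI Mk) => /(_ HMk) /subsetP; apply; apply/imsetP; exists (a k); [exact: Ha|by []].
  have LMk : left_ideal Mk.
    apply/left_idealP; split.
    - by apply/imsetP; exists 0; [rewrite soc0|rewrite lift0].
    - move=> _ _ /imsetP[z1 z1S ->] /imsetP[z2 z2S ->]; apply/imsetP.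
      by exists (z1 - z2); [rewrite socB|rewrite liftB].
    - move=> r _ /imsetP[z zS ->]; apply/imsetP.
      by exists (r k * z); [rewrite socM|rewrite liftMl].
  apply/and3P; split => //.
    case: (socle_nz k) => s sS s0; apply/negP => /eqP E.
    have : liftc s \in Mk by apply/imsetP; exists s.
    by rewrite E inE lift_eq0 (negbTE s0).
  apply/forallP => J; apply/implyP => /andP[LJ]; rewrite properE => /andP[JM nMJ].
  apply/negPn/negP => J0.
  have [j jJ j0] := nonzero_elt (lid0 LJ) J0.
  case/imsetP: (subsetP JM j jJ) => z zS jE.
  have zL : z \in [set j' k | j' : T in J] by apply/imsetP; exists j => //; rewrite jE lift_at.
  have z0 : z != 0 by rewrite -lift_eq0 -jE.
  have sub := socle_sub (loc k) (Hsq k) (proj_ideal k LJ) zL z0.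
  case/negP: nMJ; apply/subsetP => _ /imsetP[s sS ->].
  case/imsetP: (subsetP sub s sS) => j' j'J sE.
  case/imsetP: (subsetP JM j' j'J) => s' s'S j'E.
  by rewrite sE j'E lift_at -j'E.
Qed.

End Prod.


Section Weight.
Variables (K : finType) (F : K -> finPzRingType).
Local Notation T := (dprod F).
Hypothesis loc : forall k, local_ring (F k).
Hypothesis Hsq : forall k, #|socle (F k)| = residue_card (F k).
Variable c : K -> rat.
Hypothesis Hc : forall k, 1 + c k *+ (#|socle (F k)| - 1) = 0.

Definition Pr (a : T) : rat := \prod_k (if a k != 0 then c k else 1).
Definition fw (a : T) : rat := if a \in socle T then 1 - Pr a else 1.

Lemma Pr_shift k0 (y0 : T) (z : F k0) : y0 k0 = 0 ->
  Pr (y0 + liftc z) = (if z != 0 then c k0 else 1) * Pr y0.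
Proof.
move=> y0k; rewrite /Pr (bigD1 k0) //= [in RHS](bigD1 k0) //=.
rewrite dprod_addE lift_at y0k add0r eqxx /= mul1r.
congr (_ * _); apply: eq_bigr => k ne; by rewrite dprod_addE lift_off ?addr0 // eq_sym.
Qed.

Lemma sum_g k0 : \sum_(z in socle (F k0)) (if z != 0 then c k0 else 1) = 0.
Proof.
rewrite (bigD1 0) ?soc0 //= eqxx /=.
have -> : \sum_(i | (i \in socle (F k0)) && (i != 0)) (if i != 0 then c k0 else 1)
    = \sum_(i in [predD1 socle (F k0) & 0]) c k0.
  apply: eq_big => [i|i /andP[_ ->]] //; by rewrite !inE andbC.
rewrite sumr_const -(Hc k0); congr (_ + _); congr (_ *+ _).
by rewrite [in RHS](cardD1 0) soc0 add1n subn1.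
Qed.

Lemma fw_nhw : normalized_homogeneous_weight fw.
Proof.
split.
- rewrite /fw soc0 /Pr big1 ?subrr // => k _.
  by rewrite dprod0E eqxx.
- move=> x y E.
  have yx : y \in lprinc x by rewrite E lprinc_self.
  have xy : x \in lprinc y by rewrite -E lprinc_self.
  have key : forall a b : T, b \in lprinc a ->
      ((a \in socle T) -> (b \in socle T)) /\ (forall k, a k = 0 -> b k = 0).
    move=> a b /imsetP[s _ ->]; split; first exact: socM.
    by move=> k ak; rewrite dprod_mulE ak mulr0.
  have [s1 z1] := key x y yx; have [s2 z2] := key y x xy.
  rewrite /fw.
  have -> : (y \in socle T) = (x \in socle T) by apply/idP/idP.
  have -> : Pr y = Pr x.
    apply: eq_bigr => k _.
    by rewrite (_ : (y k == 0) = (x k == 0)) //; apply/eqP/eqP; [exact: z2|exact: z1].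
  by [].
- move=> x x0.
  have -> : \sum_(y in lprinc x) fw y
      = \sum_(y in lprinc x) (1 - (if y \in socle T then Pr y else 0)).
    by apply: eq_bigr => y _; rewrite /fw; case: ifP; rewrite ?subr0.
  rewrite sumrB sumr_const -big_mkcondr /=.
  suff -> : \sum_(y in lprinc x | y \in socle T) Pr y = 0 by rewrite subr0.
  have [k0 xk0] : exists k0, x k0 != 0.
    case: (pickP (fun k => x k != 0)) => [k0 xk0|H]; first by exists k0.
    case/eqP: x0; apply/ffunP => k; rewrite dprod0E.
    by move: (H k) => /= /negbFE /eqP.
  have subk := socle_sub (loc k0) (Hsq k0) (lprinc_ideal (x k0)) (lprinc_self (x k0)) xk0.
  pose Sx := [set y in lprinc x | y \in socle T].
  rewrite (eq_bigl (fun y => y \in Sx)); last by move=> y; rewrite inE.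
  pose z0 := fun y : T => y - liftc (y k0).
  rewrite (partition_big_imset z0) /=.
  apply: big1 => _ /imsetP[y1 y1S ->].
  case/setIdP: y1S => y1R y1soc.
  set y0 := z0 y1.
  have y0k : y0 k0 = 0 by rewrite /y0 /z0 dprodBE lift_at subrr.
  have fib : [set i in Sx | z0 i == y0] = [set y0 + liftc z | z in socle (F k0)].
    apply/setP => i; rewrite !inE; apply/idP/imsetP.
    - case/andP => /andP[iR iS] /eqP ie; exists (i k0).
        by move: iS; rewrite socleT_P // inE => /forallP; apply.
      by rewrite -ie /z0 subrK.
    - case=> z zS ->.
      apply/andP; split; first (apply/andP; split).
      + case/imsetP: y1R => s _ y1E.
        case/imsetP: (subsetP subk z zS) => r _ zE.
        apply/imsetP; exists (s - liftc (s k0) + liftc r) => //.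
        by rewrite /y0 /z0 y1E zE mulrDl mulrBl !liftMr dprod_mulE.
      + rewrite socleT_P // inE; apply/forallP => k.
        move: y1soc; rewrite socleT_P // inE => /forallP H.
        rewrite dprod_addE /y0 /z0 dprodBE.
        case: (eqVneq k0 k) => [<-|ne]; rewrite ?lift_at ?lift_off //.
          by rewrite subrr add0r.
        by rewrite subr0 addr0.
      + by rewrite /z0 dprod_addE y0k add0r lift_at addrK.
  rewrite (eq_bigl (fun i => i \in [set i in Sx | z0 i == y0])); last first.
    by move=> i; rewrite !inE.
  rewrite fib big_imset /=; last first.
    by move=> z1 z2 _ _ /addrI e; rewrite -(lift_at z1) e lift_at.
  rewrite (eq_bigr (fun z => (if z != 0 then c k0 else 1) * Pr y0)); last first.
    by move=> z _; rewrite Pr_shift.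
  by rewrite -mulr_suml sum_g mul0r.
Qed.

End Weight.

Lemma expr_card (I : finType) (A : {set I}) (x : rat) :
  x ^+ #|A| = \prod_(j in A) x.
Proof. by rewrite prodr_const. Qed.

Theorem theorem3p9 (t : nat) (n : 'I_t -> nat)
    (R : forall i : 'I_t, 'I_(n i) -> finNzRingType) (q : 'I_t -> nat) :
  (forall i : 'I_t, (0 < n i)%N) ->
  (forall (i : 'I_t) (j : 'I_(n i)), local_ring (R i j)) ->
  (forall (i : 'I_t) (j : 'I_(n i)), frobenius_ring (R i j)) ->
  (forall (i : 'I_t) (j : 'I_(n i)), residue_card (R i j) = q i) ->
  (forall (i : 'I_t) (j : 'I_(n i)), #|socle (R i j)| = q i) ->
  injective q ->
  forall w : std_ring R -> rat,
    normalized_homogeneous_weight w <->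
    (forall a : std_ring R,
       w a = if a \in socle (std_ring R)
             then 1 - \prod_(i < t) (- 1 / ((q i)%:R - 1)) ^+ block_wt a i
             else 1).
Proof.
move=> Hn Hloc Hfrob Hres Hsoc Hinj w.
pose F := fun k : std_index n => (R (tag k) (tagged k) : finPzRingType).
have loc : forall k, local_ring (F k) by move=> k; apply: Hloc.
have Hsq : forall k, #|socle (F k)| = residue_card (F k).
  by move=> k; rewrite /F Hsoc Hres.
pose c := fun k : std_index n => (- 1 / ((q (tag k))%:R - 1) : rat).
have Hc : forall k, 1 + c k *+ (#|socle (F k)| - 1) = 0.
  move=> k; have q2 : (1 < q (tag k))%N.
    by rewrite -(Hres (tag k) (tagged k)); exact: residue_gt1 (Hloc _ _).
  have d0 : ((q (tag k))%:R - 1 : rat) != 0.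
    by rewrite subr_eq0 pnatr_eq1 gtn_eqF.
  rewrite /F Hsoc -mulr_natr natrB ?(ltnW q2) // /c divfK //.
have prodE : forall a : std_ring R,
    \prod_(i < t) (- 1 / ((q i)%:R - 1)) ^+ block_wt a i = Pr c a.
  move=> a; rewrite /Pr /block_wt.
  rewrite (eq_bigr (fun i : 'I_t => \prod_(j < n i)
      (if a (Tagged (fun i0 => 'I_(n i0)) j) != 0 then - 1 / ((q i)%:R - 1) else 1))); last first.
    move=> i _; rewrite expr_card big_mkcond /=.
    by apply: eq_bigr => j _; rewrite inE.
  rewrite sig_big_dep /=.
  by apply: eq_bigr => -[i j] _.
have fwE : forall a : std_ring R, fw c a = (if a \in socle (std_ring R)
             then 1 - \prod_(i < t) (- 1 / ((q i)%:R - 1)) ^+ block_wt a i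
             else 1).
  by move=> a; rewrite prodE.
have FW := fw_nhw loc Hsq Hc.
split.
- by move=> H a; rewrite -fwE (nhw_unique H FW).
- move=> H; have Hw : forall a, w a = fw c a by move=> a; rewrite H fwE.
  case: FW => h0 h1 h2; split.
  + by rewrite Hw.
  + by move=> x y E; rewrite !Hw; apply: h1.
  + move=> x x0; rewrite -(h2 x x0); apply: eq_bigr => y _; exact: Hw.
Qed.
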